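(* Let $\alpha\in(0,1)$, $\lambda\in(0,\tfrac12)$, and let $\Gamma^*$ be defined by the exponential formula $\Gamma^*=\sum_{j\ge0}\frac1{j!}\sum_{\mathbf n_1,\dots,\mathbf n_j}\pi^{(\mathbf n_1)}\cdots\pi^{(\mathbf n_j)}D^{(\mathbf n_1)}\cdots D^{(\mathbf n_j)}$ from a family $\{\pi^{(\mathbf n)}\}_{\mathbf n\in\mathbb N_0^{1+d}}\subset\mathsf T^*$ with $\pi^{(\mathbf n)}_\beta\ne0\Rightarrow|\beta|>|\mathbf n|$. Then for all multiindices $\beta,\gamma$ (not necessarily populated): (a) $(\Gamma^* )_\beta^\gamma$, as a function of the coefficients $\{\pi^{(\mathbf n)}_{\beta'}\}$, does not depend on $\pi^{(\mathbf n)}_{\beta'}$ unless $|\beta'|_\prec\le|\beta|_\prec$; (b) if $\sum_\ell\gamma(\ell)>0$, then $(\Gamma^* )_\beta^\gamma$ does not depend on $\pi^{(\mathbf n)}_{\beta'}$ unless $|\beta'|_\prec<|\beta|_\prec$; (c) $(\Gamma^*-\mathrm{id})_\beta^\gamma\ne0$ implies $|\gamma|_\prec<|\beta|_\prec$ and $|\gamma|<|\beta|$.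
   Context: Multiindices: finitely supported maps $\beta:\mathbb N_0\,\dot\cup\,\mathbb N_0\,\dot\cup\,(\mathbb N_0^{1+d}\setminus\{\mathbf0\})\to\mathbb N_0$ (elements $k$ of the first copy, $\ell$ of the second, $\mathbf n$ of the third). Monomials $\mathsf z^\beta=\prod_k\mathsf a_k^{\beta(k)}\prod_\ell\mathsf b_\ell^{\beta(\ell)}\prod_{\mathbf n\ne\mathbf0}\mathsf p_{\mathbf n}^{\beta(\mathbf n)}$ in the formal power series ring $\mathbb R[[\mathsf a_k,\mathsf b_\ell,\mathsf p_{\mathbf n}]]$; matrix coefficients $A\mathsf z^\gamma=\sum_\beta A_\beta^\gamma\mathsf z^\beta$. With $\mathfrak s=(4,1,\dots,1)$, $|\mathbf n|:=\sum_i\mathfrak s_i\mathbf n_i$; $[\beta]:=\sum_kk\beta(k)+\sum_\ell\ell\beta(\ell)-\sum_{\mathbf n\ne\mathbf0}\beta(\mathbf n)$, $|\beta|_p:=\sum_{\mathbf n\ne\mathbf0}|\mathbf n|\beta(\mathbf n)$, homogeneity $|\beta|:=\alpha(1+[\beta])+|\beta|_p$; weighted length $|\beta|_\prec:=\sum_k\beta(k)+\sum_\ell\beta(\ell)+\lambda\sum_{\mathbf n\ne\mathbf0}|\mathbf n|\beta(\mathbf n)$. $\beta$ is populated if $1+\sum_kk\beta(k)+\sum_\ell\ell\beta(\ell)=\sum_\ell\beta(\ell)+\sum_{\mathbf n\ne\mathbf0}\beta(\mathbf n)$ and ($\beta=g_{\mathbf n}$ for some $\mathbf n\neq\mathbf0$,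 or $\sum_\ell\beta(\ell)>0$); $\mathsf T^*:=\{\pi:\pi_\beta\ne0\Rightarrow\beta\text{ populated}\}$. Derivations: $D^{(\mathbf0)}:=\sum_k(k+1)\mathsf a_{k+1}\partial_{\mathsf a_k}+\sum_\ell(\ell+1)\mathsf b_{\ell+1}\partial_{\mathsf b_\ell}$, $D^{(\mathbf n)}:=\partial_{\mathsf p_{\mathbf n}}$ for $\mathbf n\ne\mathbf0$. (Under these assumptions all matrix coefficients of $\Gamma^*$ are finite sums.) *)

(* Defs.v *)
From HB Require Import structures.
From mathcomp Require Import all_boot all_order all_algebra.
From mathcomp Require Import finmap.
From mathcomp Require multiset.
From mathcomp Require Import boolp classical_sets fsbigop reals.

Set Implicit Arguments.
Unset Strict Implicit.
Unset Printing Implicit Defensive.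
Import Order.TTheory GRing.Theory Num.Theory.
Local Open Scope classical_set_scope.
Local Open Scope ring_scope.

Section Defs.
Variable (R : realType) (d : nat).

Definition ptup := (d.+1).-tuple nat.
Definition nzt (n : ptup) : bool := has (fun x => x != 0%N) n.

(* |n| = 4 n_0 + n_1 + ... + n_d  (scaling s = (4,1,...,1)) *)
Definition nnorm (n : ptup) : nat :=
  (\sum_(i < d.+1) (if i == ord0 then 4 else 1) * tnth n i)%N.

(* index set  N0 (a_k)  \dot\cup  N0 (b_l)  \dot\cup  (N0^{1+d} \ {0}) (p_n) *)
Definition idx := (nat + nat + {n : ptup | nzt n})%type.
Definition ia (k : nat) : idx := inl (inl k).
Definition ib (l : nat) : idx := inl (inr l).

(* multiindices: finitely supported maps idx -> N0 *)
Definition mi := multiset.multiset idx.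
Definition evar (x : idx) : mi := multiset.msetn 1 x.

Definition msumn (b : mi) (w : idx -> nat) : nat :=
  (\sum_(x <- finsupp b) b x * w x)%N.
Definition msum (b : mi) (w : idx -> R) : R :=
  \sum_(x <- finsupp b) (b x)%:R * w x.

Definition bracket (b : mi) : R :=
  msum b (fun x => match x with
                   | inl (inl k) => k%:R | inl (inr l) => l%:R | inr _ => -1 end).
Definition normp (b : mi) : R :=
  msum b (fun x => match x with inr n => (nnorm (val n))%:R | _ => 0 end).
Definition homog (alpha : R) (b : mi) : R := alpha * (1 + bracket b) + normp b.
Definition wlen (lambda : R) (b : mi) : R :=
  msum b (fun x => match x with inr n => lambda * (nnorm (val n))%:R | _ => 1 end).

Definition nb (b : mi) : nat :=
  msumn b (fun x => match x with inl (inr _) => 1%N | _ => 0%N end).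

(* populated multiindices; g_n is the multiindex of the monomial p_n *)
Definition populated (b : mi) : Prop :=
  (1 + msumn b (fun x => match x with inl (inl k) => k | inl (inr l) => l | _ => 0 end)
   = nb b + msumn b (fun x => match x with inr _ => 1 | _ => 0 end))%N
  /\ ((exists p : {n : ptup | nzt n}, b = evar (inr p)) \/ (0 < nb b)%N).

(* formal power series in R[[a_k, b_l, p_n]]: coefficient functions *)
Definition PS := mi -> R.

Definition Tstar (f : PS) : Prop := forall b, f b != 0 -> populated b.

Definition mono (g : mi) : PS := fun b => (b == g)%:R.
Definition ps1 : PS := mono (@multiset.mset0 idx).
Definition mulPS (f g : PS) : PS := fun b =>
  \sum_(q \in [set q : mi * mi | multiset.msetD q.1 q.2 = b]) f q.1 * g q.2.

Definition pder (x : idx) (f : PS) : PS := fun b =>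
  ((b x).+1)%:R * f (multiset.msetD b (evar x)).
Definition mulv (x : idx) (f : PS) : PS := fun b =>
  if (0 < b x)%N then f (multiset.msetB b (evar x)) else 0.

Definition D0 (f : PS) : PS := fun b =>
  \sum_(k \in [set: nat]) ((k.+1)%:R * mulv (ia k.+1) (pder (ia k) f) b)
  + \sum_(l \in [set: nat]) ((l.+1)%:R * mulv (ib l.+1) (pder (ib l) f) b).

Definition Dop (n : ptup) (f : PS) : PS :=
  match (insub n : option {m : ptup | nzt m}) with
  | Some p => pder (inr p) f
  | None => D0 f
  end.

Definition GammaStar (pi : ptup -> PS) (f : PS) : PS := fun b =>
  \sum_(j \in [set: nat]) ((factorial j)%:R^-1 *
     \sum_(ns \in [set: j.-tuple ptup])
        mulPS (foldr mulPS ps1 [seq pi n | n <- ns])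
              (foldr Dop f ns) b).

Definition GammaC (pi : ptup -> PS) (b g : mi) : R := GammaStar pi (mono g) b.

Definition admissible (alpha : R) (pi : ptup -> PS) : Prop :=
  forall n, Tstar (pi n) /\ (forall b, pi n b != 0 -> (nnorm n)%:R < homog alpha b).

End Defs.

(* Main.v *)
Require Import Defs.
From HB Require Import structures.
From mathcomp Require Import all_boot all_order all_algebra.
From mathcomp Require Import finmap.
From mathcomp Require multiset.
From mathcomp Require Import boolp classical_sets fsbigop reals.
From mathcomp Require Import ring lra.
Import Order.TTheory GRing.Theory Num.Theory.
Local Open Scope ring_scope.
Set Implicit Arguments.


Lemma msumE (R : realType) d (b : mi d) (w : idx d -> R) :
  msum b w = \sum_(x <- multiset.EnumMset.f b) w x.
Proof.
rewrite /msum multiset.big_mset; apply: eq_bigr => x _.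
rewrite Monoid.iteropE; elim: (b x) => [|n IH] /=; first by rewrite mul0r.
rewrite -IH mulrSr mulrDl mul1r addrC //.
Qed.

Lemma msumnE d (b : mi d) (w : idx d -> nat) :
  msumn b w = (\sum_(x <- multiset.EnumMset.f b) w x)%N.
Proof. by rewrite /msumn multiset.sum_mset. Qed.

Lemma perm_msetD d (b c : mi d) :
  perm_eq (multiset.EnumMset.f (multiset.msetD b c))
          (multiset.EnumMset.f b ++ multiset.EnumMset.f c).
Proof.
apply/allP => x _; apply/eqP.
by rewrite count_cat !multiset.count_mem_mset multiset.msetE2.
Qed.

Lemma msumD (R : realType) d (b c : mi d) (w : idx d -> R) :
  msum (multiset.msetD b c) w = msum b w + msum c w.
Proof. by rewrite !msumE (perm_big _ (perm_msetD b c)) big_cat. Qed.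

Lemma msumnD d (b c : mi d) (w : idx d -> nat) :
  msumn (multiset.msetD b c) w = (msumn b w + msumn c w)%N.
Proof. by rewrite !msumnE (perm_big _ (perm_msetD b c)) big_cat. Qed.

Lemma msum1 (R : realType) d (x : idx d) (w : idx d -> R) :
  msum (evar x) w = w x.
Proof. by rewrite msumE /evar multiset.enum_msetn big_cons big_nil addr0. Qed.

Lemma msumn1 d (x : idx d) (w : idx d -> nat) :
  msumn (evar x) w = w x.
Proof. by rewrite msumnE /evar multiset.enum_msetn big_cons big_nil addn0. Qed.

Lemma msum0 (R : realType) d (w : idx d -> R) :
  msum (@multiset.mset0 _) w = 0.
Proof. by rewrite msumE multiset.enum_mset0 big_nil. Qed.

Lemma msum_lin (R : realType) d (b : mi d) (w1 w2 : idx d -> R) (c1 c2 : R) :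
  msum b (fun x => c1 * w1 x + c2 * w2 x) = c1 * msum b w1 + c2 * msum b w2.
Proof. by rewrite !msumE big_split /= -!mulr_sumr. Qed.

Lemma msum_ge0 (R : realType) d (b : mi d) (w : idx d -> R) :
  (forall x, 0 <= w x) -> 0 <= msum b w.
Proof. by move=> H; rewrite msumE sumr_ge0. Qed.

Lemma msumn_cast (R : realType) d (b : mi d) (w : idx d -> nat) :
  (msumn b w)%:R = msum b (fun x => (w x)%:R) :> R.
Proof. by rewrite msumE msumnE natr_sum. Qed.

Lemma msumn_castE (R : realType) d (b : mi d) (w : idx d -> nat) (w' : idx d -> R) :
  (forall x, (w x)%:R = w' x) -> (msumn b w)%:R = msum b w'.
Proof. by move=> H; rewrite msumn_cast msumE [RHS]msumE; apply: eq_bigr. Qed.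


Lemma msum_ext (R : realType) d (b : mi d) (w1 w2 : idx d -> R) :
  (forall x, w1 x = w2 x) -> msum b w1 = msum b w2.
Proof. by move=> H; rewrite !msumE; apply: eq_bigr => x _. Qed.

Lemma nnorm_gt0 d (n : ptup d) : nzt n -> (0 < nnorm n)%N.
Proof.
move/hasP=> [x /tnthP [i ->] nz]; rewrite /nnorm (bigD1 i) //=.
apply: ltn_addr; rewrite muln_gt0 (lt0n (tnth n i)) nz andbT; by case: (i == ord0).
Qed.

Lemma nnorm0 d (n : ptup d) : ~~ nzt n -> nnorm n = 0%N.
Proof.
move=> H; rewrite /nnorm big1 // => i _.
have := hasPn H (tnth n i) (mem_tnth _ _); rewrite negbK => /eqP ->.
by rewrite muln0.
Qed.

Lemma wlenD (R : realType) d (lam : R) (b c : mi d) :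
  wlen lam (multiset.msetD b c) = wlen lam b + wlen lam c.
Proof. by rewrite /wlen msumD. Qed.

Lemma homogD (R : realType) d (a : R) (b c : mi d) :
  homog a (multiset.msetD b c) = homog a b + homog a c - a.
Proof. rewrite /homog /bracket /normp !msumD; ring. Qed.

Lemma wlen0 (R : realType) d (lam : R) : wlen lam (@multiset.mset0 (idx d)) = 0.
Proof. by rewrite /wlen msum0. Qed.

Lemma homog0 (R : realType) d (a : R) : homog a (@multiset.mset0 (idx d)) = a.
Proof. rewrite /homog /bracket /normp !msum0; ring. Qed.

Lemma nb0 d : nb (@multiset.mset0 (idx d)) = 0%N.
Proof. by rewrite /nb msumnE multiset.enum_mset0 big_nil. Qed.

Lemma nbD d (b c : mi d) : nb (multiset.msetD b c) = (nb b + nb c)%N.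
Proof. by rewrite /nb msumnD. Qed.

Lemma wlen_w_ge0 (R : realType) d (lam : R) (x : idx d) : 0 < lam ->
  0 < (match x with inr n => lam * (nnorm (val n))%:R | _ => 1 end).
Proof.
move=> hl; case: x => [[k|l]|[n nz]] //=.
by rewrite mulr_gt0 // ltr0n nnorm_gt0.
Qed.

Lemma wlen_ge0 (R : realType) d (lam : R) (b : mi d) : 0 < lam -> 0 <= wlen lam b.
Proof. by move=> hl; apply: msum_ge0 => x; apply/ltW/wlen_w_ge0. Qed.

Lemma wlen_gt0 (R : realType) d (lam : R) (b : mi d) : 0 < lam ->
  b != @multiset.mset0 _ -> 0 < wlen lam b.
Proof.
move=> hl nz; case: (multiset.mset_0Vmem b) => [E|[x xb]]; first by rewrite E eqxx in nz.
rewrite -(multiset.msetB1K xb) wlenD /wlen msum1.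
by apply: ltr_pwDl; [apply: wlen_w_ge0|apply: wlen_ge0].
Qed.


Lemma pi_bound (R : realType) d (alpha lambda : R) (pi : ptup d -> PS R d)
  (halpha : 0 < alpha < 1) (hlambda : 0 < lambda < 2^-1)
  (hpi : admissible alpha pi) n b :
  pi n b != 0 -> lambda * (nnorm n)%:R < wlen lambda b /\ (nnorm n)%:R < homog alpha b.
Proof.
move=> nz; have [T H] := hpi n; have [pop _] := T b nz; have hn := H b nz.
split=> //.
move: pop => /(congr1 (fun m => m%:R : R)).
rewrite !natrD /nb.
pose wK := (fun x : idx d => match x with inl (inl k) => k%:R | inl (inr l) => l%:R | _ => 0 end : R).
pose wP := (fun x : idx d => match x with inr _ => 1 | _ => 0 end : R).
pose wB := (fun x : idx d => match x with inl (inr _) => 1 | _ => 0 end : R).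
rewrite (@msumn_castE R d b _ wK); last by case=> [[]|].
rewrite (@msumn_castE R d b _ wB); last by case=> [[]|].
rewrite (@msumn_castE R d b _ wP); last by case=> [[]|].
move=> pop.
have Ebr : bracket R b = msum b (fun x => 1 * wK x + (-1) * wP x).
  by rewrite /bracket; apply: msum_ext => -[[k|l]|p]; rewrite /wK /wP /=; ring.
rewrite msum_lin in Ebr.
pose wI := (fun x : idx d => match x with inr _ => 0 | _ => 1 end : R).
pose wN := (fun x : idx d => match x with inr n => (nnorm (val n))%:R | _ => 0 end : R).
have Ew : wlen lambda b = msum b (fun x => 1 * wI x + lambda * wN x).
  by rewrite /wlen; apply: msum_ext => -[[k|l]|p]; rewrite /wI /wN /=; ring.
rewrite msum_lin in Ew.
have E4 : 0 <= msum b (fun x => 1 * wI x + (- (lambda * alpha)) * wB x).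
  apply: msum_ge0 => -[[k|l]|p]; rewrite /wI /wB /=; try lra.
  by rewrite mul1r mulr1; nra.
rewrite msum_lin in E4.
have Ehom : homog alpha b = alpha * msum b wB + msum b wN.
  rewrite /homog -/(normp R b) Ebr.
  have -> : normp R b = msum b wN by [].
  have -> : 1 + (1 * msum b wK + -1 * msum b wP) = msum b wB by lra.
  by [].
rewrite Ew; rewrite Ehom in hn.
nra.
Qed.


Lemma fsbig_nz (R : realType) (I : choiceType) (A : set I) (F : I -> R) :
  \sum_(i \in A) F i != 0 -> exists i, A i /\ F i != 0.
Proof.
move=> H; apply: contrapT => N; move/eqP: H; apply; apply: fsbig1 => i Ai.
apply/eqP; rewrite -[_ == _]negbK; apply/negP => Fi; apply: N; by exists i.
Qed.

Lemma mulPS_nz (R : realType) d (f g : PS R d) b : mulPS f g b != 0 ->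
  exists q1 q2, multiset.msetD q1 q2 = b /\ f q1 != 0 /\ g q2 != 0.
Proof.
rewrite /mulPS => /fsbig_nz [[q1 q2] [/= Aq]]; rewrite mulf_eq0 negb_or => /andP [h1 h2].
by exists q1, q2.
Qed.

Lemma wlen_evar (R : realType) d (lam : R) (x : idx d) :
  wlen lam (evar x) = match x with inr n => lam * (nnorm (val n))%:R | _ => 1 end.
Proof. by rewrite /wlen msum1. Qed.

Lemma homog_evar_a (R : realType) d (a : R) k :
  homog a (evar (ia d k)) = a * (1 + k%:R).
Proof. rewrite /homog /bracket /normp !msum1 /=; ring. Qed.

Lemma homog_evar_b (R : realType) d (a : R) l :
  homog a (evar (ib d l)) = a * (1 + l%:R).
Proof. rewrite /homog /bracket /normp !msum1 /=; ring. Qed.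

Lemma homog_evar_p (R : realType) d (a : R) (p : {n : ptup d | nzt n}) :
  homog a (evar (inr p)) = (nnorm (val p))%:R.
Proof. rewrite /homog /bracket /normp !msum1 /=; ring. Qed.

Lemma addr_nz (R : realType) (a b : R) : a + b != 0 -> a != 0 \/ b != 0.
Proof.
have [->|] := eqVneq a 0; last by left.
by rewrite add0r; right.
Qed.

Lemma shift_step (R : realType) d (lam a : R) (x x' : idx d) r W Hm N S1 S2 :
  wlen lam (evar x) = wlen lam (evar x') ->
  homog a (evar x') = homog a (evar x) + a ->
  nb (evar x) = nb (evar x') ->
  wlen lam (multiset.msetD r (evar x)) = W - S1 /\
  homog a (multiset.msetD r (evar x)) = Hm - S2 /\ nb (multiset.msetD r (evar x)) = N ->
  wlen lam (multiset.msetD (evar x') r) = W - (lam * 0%:R + S1) /\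
  homog a (multiset.msetD (evar x') r) = Hm - (0%:R - a + S2) /\
  nb (multiset.msetD (evar x') r) = N.
Proof.
move=> e1 e2 e3 [h1 [h2 h3]]; move: h1 h2 h3; rewrite !wlenD !homogD !nbD => h1 h2 h3.
split; first lra. split; first lra. by rewrite -h3 e3 addnC.
Qed.

Lemma dchain (R : realType) d (lam a : R) (g : mi d) (ns : seq (ptup d)) q :
  foldr (@Dop R d) (mono R g) ns q != 0 ->
  wlen lam q = wlen lam g - \sum_(n <- ns) lam * (nnorm n)%:R /\
  homog a q = homog a g - \sum_(n <- ns) ((nnorm n)%:R - a) /\ nb q = nb g.
Proof.
elim: ns q => [|n ns IH] q /=.
  rewrite /mono; have [->|_] := eqVneq q g; last by rewrite eqxx.
  by rewrite !big_nil !subr0.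
rewrite !big_cons /Dop; case: insubP => [p nzp vp|nzn].
  rewrite /pder mulf_eq0 negb_or => /andP [_ /IH [h1 [h2 h3]]].
  move: h1 h2 h3; rewrite wlenD homogD nbD wlen_evar homog_evar_p vp => h1 h2 h3.
  split; first lra. split; first lra.
  by rewrite -h3 /nb msumn1 addn0.
rewrite (@nnorm0 d n nzn) /D0 => /addr_nz [/fsbig_nz [k [_ hk]] | /fsbig_nz [k [_ hk]]].
  move: hk; rewrite mulf_eq0 negb_or => /andP [_]; rewrite /mulv.
  case: ifP => [hq|]; last by rewrite eqxx.
  rewrite /pder mulf_eq0 negb_or => /andP [_ /IH hh].
  have Eq : multiset.msetD (evar (ia d k.+1)) (multiset.msetB q (evar (ia d k.+1))) = q.
    by apply: multiset.msetB1K; rewrite multiset.in_mset.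
  rewrite -Eq; apply: shift_step hh.
  - by rewrite !wlen_evar.
  - by rewrite !homog_evar_a -addn1 natrD; ring.
  - by rewrite /nb !msumn1.
move: hk; rewrite mulf_eq0 negb_or => /andP [_]; rewrite /mulv.
case: ifP => [hq|]; last by rewrite eqxx.
rewrite /pder mulf_eq0 negb_or => /andP [_ /IH hh].
have Eq : multiset.msetD (evar (ib d k.+1)) (multiset.msetB q (evar (ib d k.+1))) = q.
  by apply: multiset.msetB1K; rewrite multiset.in_mset.
rewrite -Eq; apply: shift_step hh.
- by rewrite !wlen_evar.
- by rewrite !homog_evar_b -addn1 natrD; ring.
- by rewrite /nb !msumn1.
Qed.


Lemma pchain (R : realType) d (alpha lambda : R) (pi : ptup d -> PS R d)
  (halpha : 0 < alpha < 1) (hlambda : 0 < lambda < 2^-1)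
  (hpi : admissible alpha pi) (ns : seq (ptup d)) q :
  foldr (@mulPS R d) (@ps1 R d) [seq pi n | n <- ns] q != 0 ->
  (ns = [::] /\ q = @multiset.mset0 _) \/
  (\sum_(n <- ns) lambda * (nnorm n)%:R < wlen lambda q /\
   \sum_(n <- ns) ((nnorm n)%:R - alpha) < homog alpha q - alpha).
Proof.
elim: ns q => [|n ns IH] q /=.
  rewrite /ps1 /mono; have [->|_] := eqVneq q (@multiset.mset0 _); last by rewrite eqxx.
  by left.
move/mulPS_nz => [q1 [q2 [<- [h1 /IH h2]]]].
have [b1 b2] := @pi_bound R d alpha lambda pi halpha hlambda hpi n q1 h1.
right; rewrite !big_cons wlenD homogD.
case: h2 => [[-> ->]|[c1 c2]].
  by rewrite !big_nil wlen0 homog0; split; lra.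
split; lra.
Qed.

Lemma term_bound (R : realType) d (alpha lambda : R) (pi : ptup d -> PS R d)
  (halpha : 0 < alpha < 1) (hlambda : 0 < lambda < 2^-1)
  (hpi : admissible alpha pi) (ns : seq (ptup d)) b g :
  ns != [::] ->
  mulPS (foldr (@mulPS R d) (@ps1 R d) [seq pi n | n <- ns])
        (foldr (@Dop R d) (mono R g) ns) b != 0 ->
  wlen lambda g < wlen lambda b /\ homog alpha g < homog alpha b.
Proof.
move=> nsn /mulPS_nz [q1 [q2 [<- [h1 h2]]]].
have [[ens _]|[c1 c2]] := @pchain R d alpha lambda pi halpha hlambda hpi ns q1 h1; first by rewrite ens in nsn.
have [e1 [e2 _]] := @dchain R d lambda alpha g ns q2 h2.
rewrite wlenD homogD; split; lra.
Qed.


Lemma pagree (R : realType) d (pi pi' : ptup d -> PS R d) (ns : seq (ptup d)) q :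
  (forall n a c, multiset.msetD a c = q -> pi' n a = pi n a) ->
  foldr (@mulPS R d) (@ps1 R d) [seq pi' n | n <- ns] q =
  foldr (@mulPS R d) (@ps1 R d) [seq pi n | n <- ns] q.
Proof.
elim: ns q => [|n ns IH] q H //=.
rewrite /mulPS; apply: eq_fsbigr => -[q1 q2]; rewrite inE /= => Aq.
rewrite (H n q1 q2 Aq) (IH q2) // => m a c Eac.
apply: (H m a (multiset.msetD c q1)).
by rewrite multiset.msetDA Eac multiset.msetDC.
Qed.

Lemma GammaC_id (R : realType) d (alpha lambda : R) (pi : ptup d -> PS R d)
  (halpha : 0 < alpha < 1) (hlambda : 0 < lambda < 2^-1)
  (hpi : admissible alpha pi) b g :
  ~ (wlen lambda g < wlen lambda b /\ homog alpha g < homog alpha b) ->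
  GammaC pi b g = (b == g)%:R.
Proof.
move=> nc.
have Z : forall j (ns : j.-tuple (ptup d)), j != 0%N ->
    mulPS (foldr (@mulPS R d) (@ps1 R d) [seq pi n | n <- ns])
          (foldr (@Dop R d) (mono R g) ns) b = 0.
  move=> j ns j0; apply/eqP; apply: contraT => h; exfalso; apply: nc.
  apply: (@term_bound R d alpha lambda pi halpha hlambda hpi ns b g _ h).
  by rewrite -size_eq0 size_tuple.
rewrite /GammaC /GammaStar.
rewrite -(fsbig_widen [set 0%N] [set: nat]) //; last first.
  move=> j [_ /= j0]; rewrite fsbig1 ?mulr0 // => ns _; apply: Z; exact/eqP.
rewrite fsbig_set1 fact0 invr1 mul1r.
rewrite -(fsbig_widen [set [tuple]] [set: 0.-tuple (ptup d)]) //; last first.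
  by move=> t [_ /= t0]; exfalso; apply: t0; rewrite (tuple0 t).
rewrite fsbig_set1 /=.
rewrite /mulPS -(fsbig_widen [set (@multiset.mset0 _, b)]); last first.
- move=> [q1 q2] [/= Aq nq]; rewrite /ps1 /mono.
  have [e1|ne] := eqVneq q1 (@multiset.mset0 _); last by rewrite mul0r.
  exfalso; apply: nq; move: Aq; rewrite e1 multiset.mset0D => ->; by [].
- by move=> q -> /=; rewrite multiset.mset0D.
rewrite fsbig_set1 /ps1 /mono /= eqxx mul1r.
by [].
Qed.

Unset Implicit Arguments.
Theorem mainTheorem5 (R : realType) (d : nat) (alpha lambda : R)
  (halpha : 0 < alpha < 1) (hlambda : 0 < lambda < 2^-1)
  (pi : ptup d -> PS R d) (hpi : admissible alpha pi) :
  forall beta gamma : mi d,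
  (* (a) *)
  (forall pi' : ptup d -> PS R d, admissible alpha pi' ->
     (forall n beta', wlen lambda beta' <= wlen lambda beta -> pi' n beta' = pi n beta') ->
     GammaC pi' beta gamma = GammaC pi beta gamma)
  /\
  (* (b) *)
  ((0 < nb gamma)%N ->
   forall pi' : ptup d -> PS R d, admissible alpha pi' ->
     (forall n beta', wlen lambda beta' < wlen lambda beta -> pi' n beta' = pi n beta') ->
     GammaC pi' beta gamma = GammaC pi beta gamma)
  /\
  (* (c) *)
  (GammaC pi beta gamma - (beta == gamma)%:R != 0 ->
     wlen lambda gamma < wlen lambda beta /\ homog alpha gamma < homog alpha beta).
Proof.
have hl0 : 0 < lambda by case/andP: hlambda.
move=> b g; split; [|split].
- move=> pi' _ H; rewrite /GammaC /GammaStar; apply: eq_fsbigr => j _.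
  congr (_ * _); apply: eq_fsbigr => ns _.
  rewrite /mulPS; apply: eq_fsbigr => -[q1 q2]; rewrite inE /= => Aq.
  congr (_ * _); apply: pagree => n a c Eac; apply: H.
  rewrite -Aq -Eac !wlenD.
  have := @wlen_ge0 R d lambda c hl0; have := @wlen_ge0 R d lambda q2 hl0; lra.
- move=> nbg pi' _ H; rewrite /GammaC /GammaStar; apply: eq_fsbigr => j _.
  congr (_ * _); apply: eq_fsbigr => ns _.
  rewrite /mulPS; apply: eq_fsbigr => -[q1 q2]; rewrite inE /= => Aq.
  have [->|nz] := eqVneq (foldr (@Dop R d) (mono R g) ns q2) 0; first by rewrite !mulr0.
  have [_ [_ e3]] := @dchain R d lambda alpha g ns q2 nz.
  have q20 : q2 != @multiset.mset0 _.
    by apply/eqP => E; move: nbg; rewrite -e3 E nb0.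
  have wq2 := @wlen_gt0 R d lambda q2 hl0 q20.
  congr (_ * _); apply: pagree => n a c Eac; apply: H.
  rewrite -Aq -Eac !wlenD.
  have := @wlen_ge0 R d lambda c hl0; lra.
- move=> H; apply: contrapT => nc; move/eqP: H; apply.
  by rewrite (@GammaC_id R d alpha lambda pi halpha hlambda hpi b g nc) subrr.
Qed.
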